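(* Let $n \ge 1$ and $1 \le k \le n$. For the threshold function $T_k:\{0,1\}^n \to \{0,1\}$ defined by $T_k(x)=1$ if $|x| \ge k$ and $T_k(x)=0$ otherwise, the spectral sensitivity satisfies \[ \lambda(T_k) = \sqrt{k\,(n+1-k)}. \]
   Context: For $x\in\{0,1\}^n$, $|x|$ denotes the Hamming weight (number of ones) of $x$. For a Boolean function $f:\{0,1\}^n\to\{0,1\}$, the sensitivity graph of $f$ is the graph on vertex set $\{0,1\}^n$ in which $x$ and $y$ are adjacent if and only if $x$ and $y$ differ in exactly one coordinate and $f(x)\neq f(y)$. Let $A_f$ denote its adjacency matrix (a symmetric $0/1$ matrix indexed by $\{0,1\}^n$). The spectral sensitivity of $f$ is $\lambda(f)=\|A_f\| = \max_{v:\|v\|_2=1}\|A_f v\|_2$, the spectral norm of $A_f$ (equivalently its largest eigenvalue). *)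

(* Defs.v *)
From HB Require Import structures.
From mathcomp Require Import all_boot all_order all_algebra.
From mathcomp Require Import classical_sets reals.
Set Implicit Arguments. Unset Strict Implicit. Unset Printing Implicit Defensive.
Import Order.TTheory GRing.Theory Num.Theory.
Local Open Scope ring_scope.

Definition cube (n : nat) := {ffun 'I_n -> bool}.

Definition hweight (n : nat) (x : cube n) : nat := #|[set i | x i]|.

Definition hneighbor (n : nat) (x y : cube n) : bool :=
  #|[set i | x i != y i]| == 1%N.

Definition sens_adj (R : pzRingType) (n : nat) (f : cube n -> bool)
  (x y : cube n) : R :=
  if hneighbor x y && (f x != f y) then 1 else 0.

Definition l2norm (R : rcfType) (n : nat) (v : cube n -> R) : R :=
  Num.sqrt (\sum_x v x ^+ 2).

Definition sens_apply (R : pzRingType) (n : nat) (f : cube n -> bool)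
  (v : cube n -> R) : cube n -> R :=
  fun x => \sum_y sens_adj R f x y * v y.

Definition spectral_sensitivity (R : realType) (n : nat) (f : cube n -> bool) : R :=
  sup [set r : R | exists v : cube n -> R,
         l2norm v = 1 /\ r = l2norm (sens_apply f v)].

Definition threshold (n k : nat) (x : cube n) : bool := (k <= hweight x)%N.

(* Main.v *)
Require Import Defs.
From mathcomp Require Import all_boot all_order all_algebra.
From mathcomp Require Import classical_sets reals.
From mathcomp Require Import zify ring lra.
Set Implicit Arguments. Unset Strict Implicit. Unset Printing Implicit Defensive.
Import Order.TTheory GRing.Theory Num.Theory.
Local Open Scope ring_scope.

Section Cube.
Variable n : nat.
Implicit Types x y : cube n.

Definition flip x (i : 'I_n) : cube n := [ffun j => if j == i then ~~ x i else x j].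

Lemma flip_diff x i : [set j | x j != flip x i j] = [set i].
Proof.
apply/setP => j; rewrite !inE ffunE.
case: (j =P i) => [->|/eqP ne]; first by case: (x i).
by rewrite ?eqxx ?(negbTE ne).
Qed.

Lemma hneighbor_flip x i : hneighbor x (flip x i).
Proof. by rewrite /hneighbor flip_diff cards1. Qed.

Lemma hneighborP x y : hneighbor x y -> exists i, y = flip x i.
Proof.
rewrite /hneighbor => /cards1P [i Hi]; exists i.
apply/ffunP => j; rewrite ffunE.
have := congr1 (fun A : {set 'I_n} => j \in A) Hi; rewrite !inE /=.
case: (j =P i) => [->|_] /=.
  by case: (x i); case: (y i).
by case: (x j); case: (y j).
Qed.

Lemma flip_inj x : injective (flip x).
Proof.
move=> i j /ffunP /(_ i); rewrite !ffunE eqxx.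
by case: eqP => // _; case: (x i).
Qed.

Lemma sum_neighbor (R : nmodType) x (F : cube n -> R) :
  \sum_y (if hneighbor x y then F y else 0) = \sum_i F (flip x i).
Proof.
rewrite -big_mkcond /=.
have -> : \sum_i F (flip x i) = \sum_(y in (flip x @: (finset.setT : {set 'I_n}))) F y.
  rewrite big_imset /=; last by move=> i j _ _; apply: flip_inj.
  by apply: eq_bigl => i; rewrite ?inE.
apply: eq_bigl => y; apply/idP/idP.
  by move/hneighborP => [i ->]; apply/imsetP; exists i.
by move/imsetP => [i _ ->]; apply: hneighbor_flip.
Qed.

Lemma hweight_flipT x i : x i -> hweight (flip x i) = (hweight x).-1.
Proof.
move=> xi; rewrite /hweight (cardsD1 i [set j | x j]) inE xi /=.
rewrite add0n; apply: eq_card => j; rewrite !inE ffunE.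
by case: eqP => [->|_]; rewrite ?xi ?eqxx.
Qed.

Lemma hweight_flipF x i : ~~ x i -> hweight (flip x i) = (hweight x).+1.
Proof.
move=> xi; rewrite /hweight.
have -> : [set j | flip x i j] = i |: [set j | x j].
  apply/setP => j; rewrite !inE ffunE.
  by case: (j =P i) => [->|_] //=; case: (x i) xi.
by rewrite cardsU1 inE xi.
Qed.

Lemma hweight_pos x i : x i -> (0 < hweight x)%N.
Proof. by move=> xi; apply/card_gt0P; exists i; rewrite inE. Qed.

Lemma hweight_le x : (hweight x <= n)%N.
Proof. by rewrite /hweight -[X in (_ <= X)%N]card_ord; apply: max_card. Qed.

Lemma sum_true (R : pzSemiRingType) x (c : R) :
  \sum_i ((x i)%:R * c) = (hweight x)%:R * c.
Proof.
rewrite -mulr_suml; congr (_ * _).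
rewrite /hweight -sum1_card natr_sum [RHS]big_mkcond /=.
by apply: eq_bigr => j _; rewrite inE; case: (x j).
Qed.

Lemma sum_false (R : pzSemiRingType) x (c : R) :
  \sum_i ((~~ x i)%:R * c) = (n - hweight x)%:R * c.
Proof.
rewrite -mulr_suml; congr (_ * _).
have -> : (n - hweight x)%N = #|~: [set j | x j]|.
  by have := cardsC [set j | x j]; rewrite card_ord /hweight; lia.
rewrite -sum1_card natr_sum [RHS]big_mkcond /=.
by apply: eq_bigr => j _; rewrite !inE; case: (x j).
Qed.
End Cube.
Lemma CS (R : realFieldType) (I : finType) (a v : I -> R) (ha : forall i, 0 <= a i) :
  (\sum_i a i * v i) ^+ 2 <= (\sum_i a i) * (\sum_i a i * v i ^+ 2).
Proof.
set S := \sum_i a i; set T := \sum_i a i * v i; set Q := \sum_i a i * v i ^+ 2.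
have E : \sum_i a i * (S * v i - T) ^+ 2 = S * (S * Q - T ^+ 2).
  transitivity (\sum_i (S ^+ 2 * (a i * v i ^+ 2) - (2 * S * T) * (a i * v i) + T ^+ 2 * a i)).
    by apply: eq_bigr => i _; ring.
  rewrite big_split sumrB /= -!mulr_sumr -/S -/T -/Q; ring.
have S0 : 0 <= S by apply: sumr_ge0 => i _.
have P : 0 <= S * (S * Q - T ^+ 2).
  rewrite -E; apply: sumr_ge0 => i _; apply: mulr_ge0 => //; apply: sqr_ge0.
case: (ltrgt0P S) S0 => // [Sp _|Sz _].
  by move: P; rewrite pmulr_rge0 // subr_ge0.
have az : forall i, a i = 0.
  move=> i; move/eqP: Sz; rewrite /S psumr_eq0 ?(fun i _ => ha i) //.
  by move/allP => /(_ i (mem_index_enum i)) /implyP /(_ isT) /eqP.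
rewrite /T big1 ?expr0n ?mulr0n; last by move=> i _; rewrite az mul0r.
by rewrite ?Sz ?mul0r.
Qed.
Section Thr.
Variables (R : realType) (n k : nat).
Hypothesis hk1 : (1 <= k)%N.
Implicit Types x y : cube n.
Local Notation f := (@threshold n k).
Local Notation A := (@sens_adj R n f).

Lemma diff_flip x i : (f x != f (flip x i)) =
  ((hweight x == k) && x i) || ((hweight x == k.-1) && ~~ x i).
Proof.
rewrite /threshold; case xi: (x i) => /=.
  rewrite hweight_flipT //; have := hweight_pos xi; rewrite ?orbF ?andbT ?andbF.
  move=> hp; apply/idP/idP; lia.
rewrite hweight_flipF ?xi // andbT.
apply/idP/idP; lia.
Qed.

Lemma adj_sum x (G : cube n -> R) :
  \sum_y A x y * G y = \sum_i (f x != f (flip x i))%:R * G (flip x i).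
Proof.
rewrite -(sum_neighbor x (fun y => (f x != f y)%:R * G y)); apply: eq_bigr => y _; rewrite /sens_adj.
case: (hneighbor x y) => /=; last by rewrite mul0r.
by case: (f x != f y).
Qed.

Lemma adj_sym x y : A x y = A y x.
Proof.
rewrite /sens_adj /hneighbor [f y == _]eq_sym.
have -> : [set i | y i != x i] = [set i | x i != y i].
  by apply/setP => i; rewrite !inE eq_sym.
by [].
Qed.

Definition dg (w : nat) : R :=
  if w == k then k%:R else if w == k.-1 then (n + 1 - k)%:R else 0.

Lemma deg x : \sum_y A x y = dg (hweight x).
Proof.
have -> : \sum_y A x y = \sum_y A x y * 1 by apply: eq_bigr => y _; rewrite mulr1.
rewrite (adj_sum x (fun _ => 1)).
rewrite /dg; case: (hweight x =P k) => [wk|nwk].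
  transitivity (\sum_i ((x i)%:R * (1:R))); last by rewrite sum_true wk mulr1.
  apply: eq_bigr => i _.
  rewrite diff_flip wk eqxx /=.
  have -> : (k == k.-1) = false by lia.
  by rewrite orbF mulr1.
case: (hweight x =P k.-1) => [wk|nwk1].
  have -> : (n + 1 - k)%N = (n - hweight x)%N by lia.
  transitivity (\sum_i ((~~ x i)%:R * (1:R))); last by rewrite sum_false mulr1.
  apply: eq_bigr => i _.
  rewrite diff_flip wk eqxx /=.
  have -> : (k.-1 == k) = false by lia.
  by rewrite mulr1.
rewrite big1 // => i _; rewrite diff_flip.
have -> : (hweight x == k) = false by apply/eqP.
have -> : (hweight x == k.-1) = false by apply/eqP.
by rewrite mul0r.
Qed.

Lemma dg_km1 : dg (k.-1) = (n + 1 - k)%:R.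
Proof. rewrite /dg; have -> : (k.-1 == k) = false by lia.
by rewrite eqxx. Qed.

Lemma dg_k : dg k = k%:R.
Proof. by rewrite /dg eqxx. Qed.

Lemma upper_y y : \sum_x A x y * dg (hweight x) <= (k * (n + 1 - k))%:R.
Proof.
have -> : \sum_x A x y * dg (hweight x) = \sum_x A y x * dg (hweight x).
  by apply: eq_bigr => x _; rewrite adj_sym.
rewrite (adj_sum y (fun x => dg (hweight x))).
case: (hweight y =P k) => [wk|nwk].
  have E : \sum_i (f y != f (flip y i))%:R * dg (hweight (flip y i))
     = \sum_i ((y i)%:R * (n + 1 - k)%:R).
    apply: eq_bigr => i _; rewrite diff_flip wk eqxx /=.
    have -> : (k == k.-1) = false by lia.
    case yi: (y i) => /=; last by rewrite !mul0r.
    by rewrite hweight_flipT ?yi // wk dg_km1.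
  by rewrite E sum_true wk natrM.
case: (hweight y =P k.-1) => [wk|nwk1].
  have E : \sum_i (f y != f (flip y i))%:R * dg (hweight (flip y i))
     = \sum_i ((~~ y i)%:R * k%:R).
    apply: eq_bigr => i _; rewrite diff_flip wk eqxx /=.
    have -> : (k.-1 == k) = false by lia.
    case yi: (y i) => /=; first by rewrite !mul0r.
    rewrite hweight_flipF ?yi // wk.
    have -> : (k.-1).+1 = k by lia.
    by rewrite dg_k.
  rewrite E sum_false natrM mulrC le_eqVlt; apply/orP; left; apply/eqP.
  congr (_ * _); congr (_%:R); lia.

rewrite big1 // => i _; rewrite diff_flip.
have -> : (hweight y == k) = false by apply/eqP.
have -> : (hweight y == k.-1) = false by apply/eqP.
by rewrite mul0r.
Qed.

Lemma Au x : \sum_y A x y * (hweight y == k)%:R = (hweight x == k.-1)%:R * (n + 1 - k)%:R.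
Proof.
rewrite (adj_sum x (fun y => (hweight y == k)%:R)).
case: (hweight x =P k) => [wk|nwk].
  have -> : (hweight x == k.-1) = false by rewrite wk; lia.
  rewrite big1 /=; first by rewrite mul0r.
  move=> i _; rewrite diff_flip wk eqxx /=.
  have -> : (k == k.-1) = false by lia.
  case yi: (x i) => /=; last by rewrite mul0r.
  rewrite hweight_flipT ?yi // wk.
  have -> : (k.-1 == k) = false by lia.
  by rewrite mulr0.
case: (hweight x =P k.-1) => [wk|nwk1].
  have E : \sum_i (f x != f (flip x i))%:R * (hweight (flip x i) == k)%:R
     = \sum_i ((~~ x i)%:R * (1:R)).
    apply: eq_bigr => i _; rewrite diff_flip wk eqxx /=.
    have -> : (k.-1 == k) = false by lia.
    case yi: (x i) => /=; first by rewrite !mul0r.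
    rewrite hweight_flipF ?yi // wk.
    have -> : (k.-1).+1 = k by lia.
    by rewrite eqxx.
  rewrite E sum_false mulr1 /= mul1r; congr (_%:R); lia.
rewrite big1 /=; first by rewrite mul0r.
move=> i _; rewrite diff_flip.
have -> : (hweight x == k) = false by apply/eqP.
have -> : (hweight x == k.-1) = false by apply/eqP.
by rewrite mul0r.
Qed.

Lemma double_count :
  (\sum_(x : cube n) (hweight x == k.-1)%:R) * (n + 1 - k)%:R = (\sum_(x : cube n) (hweight x == k)%:R) * k%:R :> R.
Proof.
rewrite mulr_suml.
under eq_bigr do rewrite -Au.
rewrite exchange_big /= mulr_suml; apply: eq_bigr => y _.
rewrite -mulr_suml.
have -> : \sum_i A i y = \sum_i A y i by apply: eq_bigr => i _; rewrite adj_sym.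
rewrite deg /dg; case: (hweight y == k) => /=; first by rewrite mulr1 mul1r.
by rewrite mulr0 mul0r.
Qed.

Hypothesis hkn : (k <= n)%N.

Lemma exists_wk : exists y : cube n, hweight y = k.
Proof.
exists [ffun i : 'I_n => (i < k)%N]; rewrite /hweight.
have -> : [set i | [ffun i : 'I_n => (i < k)%N] i] =
          (widen_ord hkn @: (finset.setT : {set 'I_k})).
  apply/setP => i; rewrite !inE ffunE; apply/idP/imsetP.
    by move=> ik; exists (Ordinal ik) => //; apply: val_inj.
  by move=> [j _ ->] /=.
rewrite card_imset ?cardsT ?card_ord //.
by move=> a b /(congr1 val) /= /val_inj.
Qed.

Lemma upper v : l2norm (sens_apply f v) <= Num.sqrt ((k * (n + 1 - k))%:R : R) * l2norm v.
Proof.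
set K : R := (k * (n + 1 - k))%:R.
rewrite /l2norm -sqrtrM ?ler0n // ler_sqrt; last first.
  by apply: mulr_ge0; [apply: ler0n | apply: sumr_ge0 => y _; apply: sqr_ge0].
have A0 : forall x y, 0 <= A x y by move=> x y; rewrite /sens_adj; case: ifP.
apply: (@le_trans _ _ (\sum_x (\sum_y A x y) * (\sum_y A x y * v y ^+ 2))).
  by apply: ler_sum => x _; apply: CS.
under eq_bigr do rewrite deg mulr_sumr.
rewrite exchange_big /= mulr_sumr; apply: ler_sum => y _.
have -> : \sum_i dg (hweight i) * (A i y * v y ^+ 2) =
          (\sum_i A i y * dg (hweight i)) * v y ^+ 2.
  by rewrite mulr_suml; apply: eq_bigr => i _; ring.
by apply: ler_wpM2r; [apply: sqr_ge0 | apply: upper_y].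
Qed.

Lemma lower : exists v, l2norm v = 1 /\
  l2norm (sens_apply f v) = Num.sqrt ((k * (n + 1 - k))%:R : R).
Proof.
set N : R := \sum_(y : cube n) (hweight y == k)%:R.
set M : R := \sum_(y : cube n) (hweight y == k.-1)%:R.
have Np : 0 < N.
  have [y0 wy0] := exists_wk.
  rewrite /N (bigD1 y0) //= wy0 eqxx /=.
  by rewrite ltr_pwDl ?ltr01 // sumr_ge0.
set c := (Num.sqrt N)^-1.
have c2 : c ^+ 2 = N^-1 by rewrite /c exprVn sqr_sqrtr // ltW.
have sq : forall b : bool, (b%:R : R) ^+ 2 = b%:R by case; rewrite ?expr1n ?expr0n.
exists (fun y => c * (hweight y == k)%:R); split.
  rewrite /l2norm; transitivity (Num.sqrt (1 : R)); last exact: sqrtr1.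
  congr Num.sqrt.
  under eq_bigr => y _ do rewrite /= exprMn sq.
  by rewrite -mulr_sumr c2 -/N mulVf // gt_eqF.
rewrite /l2norm /sens_apply; congr Num.sqrt.
under eq_bigr => x _.
  rewrite (_ : \sum_y A x y * (c * (hweight y == k)%:R) = c * \sum_y A x y * (hweight y == k)%:R); last first.
    by rewrite mulr_sumr; apply: eq_bigr => y _; ring.
  rewrite Au exprMn exprMn sq.
  over.
rewrite /= -mulr_sumr -mulr_suml -/M.
have DC := double_count.
rewrite -/M -/N in DC.
rewrite c2 expr2 (mulrA M) DC natrM.
field; by rewrite gt_eqF.
Qed.

Lemma main_sec : spectral_sensitivity R f = Num.sqrt ((k * (n + 1 - k))%:R : R).
Proof.
have [v0 [hv0 hAv0]] := lower.
rewrite /spectral_sensitivity.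
set E := (X in sup X).
have ub : ubound E (Num.sqrt ((k * (n + 1 - k))%:R : R)).
  move=> r [v [hv ->]]; have := upper v; by rewrite hv mulr1.
apply/eqP; rewrite eq_le; apply/andP; split.
  by apply: ge_sup => //; exists (Num.sqrt ((k * (n + 1 - k))%:R : R)); exists v0.
apply: sup_upper_bound.
  by split; [exists (Num.sqrt ((k * (n + 1 - k))%:R : R)); exists v0 | exists (Num.sqrt ((k * (n + 1 - k))%:R : R))].
by exists v0.
Qed.

End Thr.

Theorem mainTheorem1 (R : realType) (n k : nat) (hn : (1 <= n)%N)
  (hk1 : (1 <= k)%N) (hkn : (k <= n)%N) :
  spectral_sensitivity R (@threshold n k) = Num.sqrt ((k * (n + 1 - k))%:R : R).
Proof. exact: main_sec. Qed.
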